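(* Let $D$ be a Newton diagram in $2$ variables whose support $K$ contains all $(a,b)\in\mathbb N_0^2$ with $a+b<k$ and at least one point $(a,b)$ with $a+b=k$. Then there exists a Newton diagram $\tilde D$ with support $\tilde K$ such that $K\subset\tilde K$, $\tilde D|_K=D|_K$, $\tilde K$ contains all $(a,b)\in\mathbb N_0^2$ with $a+b=k$, every point of $\tilde K\setminus K$ satisfies $a+b=k$, and $SC(\tilde D)\le SC(D)$.
   Context: For $m\in\mathbb Z^n$ write $|m|=m_1+\dots+m_n$; $e_1,\dots,e_n$ is the standard basis. A Newton diagram in $n$ variables is a function $D\colon\mathbb Z^n\to\{0,P,N\}$ ($P,N$ formal symbols) whose support $K=D^{-1}(\{P,N\})$ is a finite nonempty subset of $\mathbb N_0^n$. For $a\in\mathbb Z^n$ let $E(a)=\{a,a-e_1,\dots,a-e_n\}$; $E(a)$ is a node of $D$ if the image $D(E(a))$ equals $\{P\}$, $\{N\}$, $\{0,P\}$ or $\{0,N\}$. For $n=2$: a node $E(a)$ is an interior node if no point of $E(a)$ has $D$-value $0$, an edge node if exactly one does, a vertex node if exactly two do; a vertex node is a bottom node if its two $0$-points are $a-e_1$ and $a-e_2$. The weighted surface count is $SC(D)=(\#\text{interior nodes})+\tfrac12\big((\#\text{edge nodes})+(\#\text{vertex nodes})-(\#\text{bottom nodes})\big)$. *)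

(* Defs.v *)
From Stdlib Require Import ZArith QArith List Lia.
Import ListNotations.
Open Scope Z_scope.

Inductive val : Type := Zero | Pv | Nv.

Definition val_eqb (u v : val) : bool :=
  match u, v with
  | Zero, Zero | Pv, Pv | Nv, Nv => true
  | _, _ => false
  end.

(* A Newton diagram in 2 variables: a function Z^2 -> {0,P,N} whose support
   is a finite nonempty subset of N_0^2.  Finiteness is witnessed by a bound
   [bnd]: the support lies in [0,bnd)^2.  (The counts below do not depend on
   the particular bound chosen.) *)
Record NewtonDiagram2 : Type := {
  nd_fun :> Z * Z -> val;
  nd_bnd : nat;
  nd_supp_box : forall p, nd_fun p <> Zero ->
      0 <= fst p < Z.of_nat nd_bnd /\ 0 <= snd p < Z.of_nat nd_bnd;
  nd_nonempty : exists p, nd_fun p <> Zero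
}.

(* the values of D on E(a) = {a, a - e1, a - e2} *)
Definition v0 (D : Z * Z -> val) (a : Z * Z) := D a.
Definition v1 (D : Z * Z -> val) (a : Z * Z) := D (fst a - 1, snd a).
Definition v2 (D : Z * Z -> val) (a : Z * Z) := D (fst a, snd a - 1).

Definition has_val (D : Z * Z -> val) (a : Z * Z) (v : val) : bool :=
  val_eqb (v0 D a) v || val_eqb (v1 D a) v || val_eqb (v2 D a) v.

(* E(a) is a node iff D(E(a)) is one of {P}, {N}, {0,P}, {0,N}, i.e. the
   image contains P or N but not both. *)
Definition is_node (D : Z * Z -> val) (a : Z * Z) : bool :=
  (has_val D a Pv || has_val D a Nv) && negb (has_val D a Pv && has_val D a Nv).

Definition nzeros (D : Z * Z -> val) (a : Z * Z) : nat :=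
  (if val_eqb (v0 D a) Zero then 1 else 0) +
  (if val_eqb (v1 D a) Zero then 1 else 0) +
  (if val_eqb (v2 D a) Zero then 1 else 0).

Definition interior_node D a : bool := is_node D a && Nat.eqb (nzeros D a) 0.
Definition edge_node D a : bool := is_node D a && Nat.eqb (nzeros D a) 1.
Definition vertex_node D a : bool := is_node D a && Nat.eqb (nzeros D a) 2.
Definition bottom_node D a : bool :=
  vertex_node D a && val_eqb (v1 D a) Zero && val_eqb (v2 D a) Zero.

(* all a in [0,B]^2; every node of a diagram with support in [0,B)^2 has
   a in [0,B]^2, since some point of E(a) lies in the support. *)
Definition box (B : nat) : list (Z * Z) :=
  list_prod (map Z.of_nat (seq 0 (S B))) (map Z.of_nat (seq 0 (S B))).

Definition count_nodes (f : (Z * Z -> val) -> Z * Z -> bool)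
  (D : NewtonDiagram2) : nat :=
  length (filter (f (nd_fun D)) (box (nd_bnd D))).

Definition SC (D : NewtonDiagram2) : Q :=
  inject_Z (Z.of_nat (count_nodes interior_node D)) +
  (1 # 2) * (inject_Z (Z.of_nat (count_nodes edge_node D))
             + inject_Z (Z.of_nat (count_nodes vertex_node D))
             - inject_Z (Z.of_nat (count_nodes bottom_node D))).

(* Main.v *)
Require Import Defs.
From Stdlib Require Import ZArith QArith List Lia Permutation.
Import ListNotations.
Open Scope Z_scope.

Definition W2 (u v w : val) : Z :=
  let hp := val_eqb u Pv || val_eqb v Pv || val_eqb w Pv in
  let hn := val_eqb u Nv || val_eqb v Nv || val_eqb w Nv in
  let nz := ((if val_eqb u Zero then 1 else 0) + (if val_eqb v Zero then 1 else 0)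
            + (if val_eqb w Zero then 1 else 0))%nat in
  if (hp || hn) && negb (hp && hn) then
    match nz with
    | 0%nat => 2
    | 1%nat => 1
    | 2%nat => if val_eqb v Zero && val_eqb w Zero then 0 else 1
    | _ => 0 end
  else 0.

Definition b2 (b : bool) : Z := if b then 1 else 0.

Definition ww (D : Z * Z -> val) (a : Z * Z) : Z :=
  2 * b2 (interior_node D a) + b2 (edge_node D a) + b2 (vertex_node D a)
  - b2 (bottom_node D a).

Lemma ww_W2 D a : ww D a = W2 (D a) (D (fst a - 1, snd a)) (D (fst a, snd a - 1)).
Proof.
  unfold ww, bottom_node, interior_node, edge_node, vertex_node, is_node, nzeros,
    has_val, v0, v1, v2, W2.
  destruct (D a), (D (fst a - 1, snd a)), (D (fst a, snd a - 1)); reflexivity.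
Qed.

Ltac vcases := repeat match goal with v : val |- _ => destruct v end;
  try (vm_compute; congruence); try (vm_compute; lia); try (intros; vm_compute; lia);
  try (intros; exfalso; auto).

Lemma W2_conf1 t : W2 t Nv Pv = 0. Proof. destruct t; reflexivity. Qed.
Lemma W2_conf2 t : W2 t Pv Nv = 0. Proof. destruct t; reflexivity. Qed.
Lemma W2_zz t : W2 t Zero Zero = 0. Proof. destruct t; reflexivity. Qed.
Lemma W2_h c c' : W2 Pv c c' + W2 Nv c c' <= 2 * W2 Zero c c'.
Proof. vcases. Qed.
Lemma W2_h0 c : c <> Zero -> W2 Pv Zero c + W2 Nv Zero c <= 2 * W2 Zero Zero c - 1.
Proof. vcases. Qed.
Lemma W2_hk c : c <> Zero -> W2 Pv c Zero + W2 Nv c Zero <= 2 * W2 Zero c Zero - 1.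
Proof. vcases. Qed.
Lemma W2_D t a : a <> Zero -> W2 t a Pv + W2 t a Nv <= 2 * W2 t a Zero.
Proof. vcases. Qed.
Lemma W2_E t b : b <> Zero -> W2 t Pv b + W2 t Nv b <= 2 * W2 t Zero b.
Proof. vcases. Qed.
Lemma W2_F t : W2 t Pv Zero + W2 t Nv Zero <= 2 * W2 t Zero Zero + 2.
Proof. vcases. Qed.
Lemma W2_B t : W2 t Zero Pv + W2 t Zero Nv <= 2 * W2 t Zero Zero + 2.
Proof. vcases. Qed.

Fixpoint PS (tt cl cr y : nat -> val) (n : nat) : Z :=
  match n with
  | O => W2 (tt O) Zero (y O)
  | S m => PS tt cl cr y m + W2 (tt (S m)) (y m) (y (S m)) + W2 (y m) (cl m) (cr m)
  end.

Lemma PS_ext tt cl cr y tt' cl' cr' y' n :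
  (forall i, (i <= n)%nat -> tt i = tt' i /\ cl i = cl' i /\ cr i = cr' i /\ y i = y' i) ->
  PS tt cl cr y n = PS tt' cl' cr' y' n.
Proof.
  induction n as [|m IH]; intros H; simpl.
  - destruct (H O (le_n _)) as (->&_&_&->). reflexivity.
  - rewrite IH by (intros; apply H; lia).
    destruct (H (S m) (le_n _)) as (->&_&_&->).
    destruct (H m (le_S _ _ (le_n _))) as (_&->&->&->). reflexivity.
Qed.

Definition upd (y : nat -> val) (n : nat) (v : val) : nat -> val :=
  fun i => if Nat.eqb i n then v else y i.

Lemma PS_upd tt cl cr y m v :
  PS tt cl cr (upd y (S m) v) (S m) =
  PS tt cl cr y m + W2 (tt (S m)) (y m) v + W2 (y m) (cl m) (cr m).
Proof.
  simpl. rewrite (PS_ext tt cl cr (upd y (S m) v) tt cl cr y m).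
  - unfold upd. rewrite Nat.eqb_refl.
    replace (Nat.eqb m (S m)) with false by (symmetry; apply Nat.eqb_neq; lia).
    reflexivity.
  - intros i Hi. unfold upd. replace (Nat.eqb i (S m)) with false
      by (symmetry; apply Nat.eqb_neq; lia). auto.
Qed.

Lemma dp (k : nat) (dd tt cl cr : nat -> val)
  (Hc0 : cl O = Zero) (Hc0' : cr O <> Zero) (Hk : cr k = Zero) (Hk' : cl k <> Zero)
  (Hd : dd (S k) = Zero) (Hex : exists j, (j <= k)%nat /\ dd j <> Zero) :
  exists y, (forall i, (i <= k)%nat -> y i <> Zero /\ (dd i <> Zero -> y i = dd i))
    /\ y (S k) = Zero /\ PS tt cl cr y (S k) <= PS tt cl cr dd (S k).
Proof.
  set (free := fun i => (i <= k)%nat /\ dd i = Zero).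
  set (Good := fun (y : nat -> val) n => forall i, (i <= n)%nat ->
          (free i -> y i <> Zero) /\ (~ free i -> y i = dd i)).
  assert (free_dec : forall i, {free i} + {~ free i}).
  { intro i. unfold free. destruct (le_lt_dec i k) as [h|h].
    - destruct (dd i); [left; auto| right; intros [_ ?]; discriminate
                       | right; intros [_ ?]; discriminate].
    - right; intros [? _]; lia. }
  assert (Good_upd : forall y m v, Good y m -> (free (S m) -> v <> Zero) ->
            (~ free (S m) -> v = dd (S m)) -> Good (upd y (S m) v) (S m)).
  { intros y m v Hy H1 H2 i Hi. unfold upd.
    destruct (Nat.eqb_spec i (S m)) as [->|ne]; [split; auto|].
    apply Hy; lia. }
  assert (Inv : forall n, (n <= S k)%nat ->
    (~ free n -> exists y, Good y n /\ PS tt cl cr y n <= PS tt cl cr dd n) /\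
    (free n -> exists yP yN, Good yP n /\ Good yN n /\ yP n = Pv /\ yN n = Nv /\
       PS tt cl cr yP n + PS tt cl cr yN n <= 2 * PS tt cl cr dd n + 1 + (if Nat.eqb n 0 then 1 else 0) /\
       ((exists j, (j < n)%nat /\ ~ free j) -> PS tt cl cr yP n + PS tt cl cr yN n <= 2 * PS tt cl cr dd n))).
  { induction n as [|m IH]; intros Hn.
    - split.
      + intros Hf. exists dd. split; [|lia]. intros i Hi.
        assert (i = O) by lia; subst. split; [tauto|auto].
      + intros Hf. exists (fun _ => Pv), (fun _ => Nv).
        split; [intros i Hi; split; [discriminate|intros HH; assert (i=O) by lia; subst; contradiction]|].
        split; [intros i Hi; split; [discriminate|intros HH; assert (i=O) by lia; subst; contradiction]|].
        split; [auto|]. split; [auto|]. cbn [PS Nat.eqb].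
        destruct Hf as [_ Hf]. rewrite Hf.
        pose proof (W2_B (tt O)). split; [lia|]. intros (j&Hj&_); lia.
    - destruct (IH ltac:(lia)) as [IHa IHb]. clear IH.
      assert (Hm : (m <= k)%nat) by lia.
      destruct (free_dec m) as [Fm|Fm]; destruct (free_dec (S m)) as [Fs|Fs].
      +
        destruct (IHb Fm) as (yP&yN&GP&GN&EP&EN&B1&B2). split; [tauto|intros _].
        exists (upd yN (S m) Pv), (upd yP (S m) Nv).
        split; [apply Good_upd; auto; [discriminate|tauto]|].
        split; [apply Good_upd; auto; [discriminate|tauto]|].
        split; [unfold upd; rewrite Nat.eqb_refl; auto|].
        split; [unfold upd; rewrite Nat.eqb_refl; auto|].
        rewrite !PS_upd, EP, EN. simpl PS.
        assert (dm : dd m = Zero) by (destruct Fm; auto).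
        assert (ds : dd (S m) = Zero) by (destruct Fs; auto).
        rewrite dm, ds, W2_conf1, W2_conf2, W2_zz.
        pose proof (W2_h (cl m) (cr m)).
        split.
        * destruct m as [|m'].
          -- rewrite Hc0 in *. pose proof (W2_h0 (cr O) Hc0'). cbn [Nat.eqb] in *. lia.
          -- cbn [Nat.eqb] in *. lia.
        * intros (j&Hj&Fj). assert (j <> m) by (intro; subst; tauto).
          assert (jm : (j < m)%nat) by lia. specialize (B2 (ex_intro _ j (conj jm Fj))). lia.
      +
        destruct (IHb Fm) as (yP&yN&GP&GN&EP&EN&B1&B2). split; [intros _|tauto].
        assert (dm : dd m = Zero) by (destruct Fm; auto).
        set (b := dd (S m)).
        assert (Hz : forall y, PS tt cl cr (upd y (S m) b) (S m) - PS tt cl cr dd (S m) =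
           PS tt cl cr y m - PS tt cl cr dd m + (W2 (tt (S m)) (y m) b - W2 (tt (S m)) Zero b)
           + (W2 (y m) (cl m) (cr m) - W2 Zero (cl m) (cr m))).
        { intro y. rewrite PS_upd. simpl (PS _ _ _ dd (S m)). rewrite dm. fold b. lia. }
        assert (key : (PS tt cl cr (upd yP (S m) b) (S m) - PS tt cl cr dd (S m)) +
                      (PS tt cl cr (upd yN (S m) b) (S m) - PS tt cl cr dd (S m)) <= 1).
        { rewrite !Hz, EP, EN.
          pose proof (W2_h (cl m) (cr m)).
          destruct (val_eqb b Zero) eqn:Eb.
          - assert (bz : b = Zero) by (destruct b; simpl in Eb; congruence).
            assert (mk : m = k).
            { destruct (Nat.eq_dec m k); auto. exfalso. apply Fs. split; [lia|exact bz]. }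
            subst m. rewrite bz.
            destruct Hex as (j&Hj&Dj).
            assert (j <> k) by (intro; subst; congruence).
            assert (Fj : ~ free j) by (intros [_ ?]; congruence).
            assert (jm : (j < k)%nat) by lia. specialize (B2 (ex_intro _ j (conj jm Fj))).
            pose proof (W2_F (tt (S k))). rewrite Hk in *.
            pose proof (W2_hk (cl k) Hk'). lia.
          - assert (bz : b <> Zero) by (intro e; rewrite e in Eb; discriminate).
            pose proof (W2_E (tt (S m)) b bz).
            destruct m as [|m'].
            + rewrite Hc0 in *. pose proof (W2_h0 (cr O) Hc0'). cbn [Nat.eqb] in B1. lia.
            + cbn [Nat.eqb] in B1. lia. }
        destruct (Z_le_gt_dec (PS tt cl cr (upd yP (S m) b) (S m)) (PS tt cl cr dd (S m))).
        * exists (upd yP (S m) b). split; [apply Good_upd; auto; tauto|lia].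
        * exists (upd yN (S m) b). split; [apply Good_upd; auto; tauto|lia].
      +
        destruct (IHa Fm) as (y&Gy&By). split; [tauto|intros _].
        assert (ym : y m = dd m) by (apply (Gy m (le_n _)); auto).
        assert (dm : dd m <> Zero) by (intro e; apply Fm; split; auto).
        assert (ds : dd (S m) = Zero) by (destruct Fs; auto).
        exists (upd y (S m) Pv), (upd y (S m) Nv).
        split; [apply Good_upd; auto; [discriminate|tauto]|].
        split; [apply Good_upd; auto; [discriminate|tauto]|].
        split; [unfold upd; rewrite Nat.eqb_refl; auto|].
        split; [unfold upd; rewrite Nat.eqb_refl; auto|].
        rewrite !PS_upd. simpl (PS _ _ _ dd (S m)). rewrite ym, ds.
        pose proof (W2_D (tt (S m)) (dd m) dm).
        cbn [Nat.eqb]. split; [|intros _]; lia.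
      +
        destruct (IHa Fm) as (y&Gy&By). split; [intros _|tauto].
        assert (ym : y m = dd m) by (apply (Gy m (le_n _)); auto).
        exists (upd y (S m) (dd (S m))). split; [apply Good_upd; auto; tauto|].
        rewrite PS_upd. simpl (PS _ _ _ dd (S m)). rewrite ym. lia. }
  destruct (Inv (S k) (le_n _)) as [Ia _].
  assert (Fk : ~ free (S k)) by (intros [? _]; lia).
  destruct (Ia Fk) as (y&Gy&By). exists y. split; [|split; auto].
  - intros i Hi. destruct (free_dec i) as [Fi|Fi].
    + split; [apply (Gy i ltac:(lia)); auto|]. intros ne; destruct Fi; congruence.
    + assert (e : y i = dd i) by (apply (Gy i ltac:(lia)); auto).
      assert (dd i <> Zero) by (intro z; apply Fi; split; auto).
      split; [congruence|auto].
  - rewrite <- Hd. apply (Gy (S k) (le_n _)); auto.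
Qed.

Definition sumZ {A} (g : A -> Z) (l : list A) : Z := fold_right (fun a acc => g a + acc) 0 l.

Lemma sumZ_app {A} (g : A -> Z) l1 l2 : sumZ g (l1 ++ l2) = sumZ g l1 + sumZ g l2.
Proof. induction l1; simpl; [lia|rewrite IHl1; lia]. Qed.

Lemma sumZ_perm {A} (g : A -> Z) l l' : Permutation l l' -> sumZ g l = sumZ g l'.
Proof. induction 1; simpl; lia. Qed.

Lemma sumZ_zero {A} (g : A -> Z) l : (forall a, In a l -> g a = 0) -> sumZ g l = 0.
Proof. induction l; simpl; intros H; [lia|]. rewrite H, IHl; auto. Qed.

Lemma sumZ_minus {A} (f g : A -> Z) l : sumZ (fun a => f a - g a) l = sumZ f l - sumZ g l.
Proof. induction l; simpl; lia. Qed.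

Definition pair_dec (p q : Z * Z) : {p = q} + {p <> q}.
Proof. decide equality; apply Z.eq_dec. Defined.

Lemma sumZ_sub (g : Z * Z -> Z) l s : NoDup l -> NoDup s -> incl s l ->
  (forall a, In a l -> ~ In a s -> g a = 0) -> sumZ g l = sumZ g s.
Proof.
  intros Hl Hs Hi Hz.
  set (r := filter (fun a => if in_dec pair_dec a s then false else true) l).
  assert (P : Permutation l (s ++ r)).
  { apply NoDup_Permutation; auto.
    - apply NoDup_app; auto. apply NoDup_filter; auto.
      intros a Ha Hr. unfold r in Hr. apply filter_In in Hr as [_ Hr].
      destruct (in_dec pair_dec a s); congruence.
    - intros x; split; intros H.
      + apply in_or_app. destruct (in_dec pair_dec x s) as [i|i]; [left; auto|right].
        unfold r; apply filter_In; split; auto. destruct (in_dec pair_dec x s); congruence.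
      + apply in_app_or in H as [H|H]; auto. unfold r in H; apply filter_In in H; tauto. }
  rewrite (sumZ_perm g _ _ P), sumZ_app, (sumZ_zero g r); [lia|].
  intros a Ha. unfold r in Ha. apply filter_In in Ha as [H1 H2].
  apply Hz; auto. destruct (in_dec pair_dec a s); congruence.
Qed.

Lemma count_sum (f : Z * Z -> bool) l :
  Z.of_nat (length (filter f l)) = sumZ (fun a => b2 (f a)) l.
Proof. unfold sumZ. induction l; simpl; auto. rewrite <- IHl. destruct (f a); simpl length; unfold b2; lia. Qed.

Lemma SC_eq (D : NewtonDiagram2) :
  Qeq (SC D) ((1 # 2) * inject_Z (sumZ (ww (nd_fun D)) (box (nd_bnd D)))).
Proof.
  assert (E : sumZ (ww (nd_fun D)) (box (nd_bnd D)) =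
    2 * Z.of_nat (count_nodes interior_node D) + Z.of_nat (count_nodes edge_node D)
    + Z.of_nat (count_nodes vertex_node D) - Z.of_nat (count_nodes bottom_node D)).
  { unfold count_nodes. rewrite !count_sum. generalize (box (nd_bnd D)).
    unfold sumZ. induction l; cbn [fold_right]; auto. rewrite IHl. unfold ww. lia. }
  rewrite E. unfold SC.
  generalize (Z.of_nat (count_nodes interior_node D)) (Z.of_nat (count_nodes edge_node D))
    (Z.of_nat (count_nodes vertex_node D)) (Z.of_nat (count_nodes bottom_node D)).
  intros i e v b. unfold Z.sub. rewrite !inject_Z_plus, inject_Z_opp, inject_Z_mult.
  unfold Qminus. change (inject_Z 2) with (2 # 1). ring.
Qed.

Lemma in_box B p : In p (box B) <-> 0 <= fst p <= Z.of_nat B /\ 0 <= snd p <= Z.of_nat B.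
Proof.
  destruct p as [x y]. unfold box. rewrite in_prod_iff, !in_map_iff. cbn [fst snd].
  split.
  - intros [(i&Hi&Ii) (j&Hj&Ij)]. apply in_seq in Ii, Ij. subst. lia.
  - intros [Hx Hy]. split.
    + exists (Z.to_nat x). rewrite in_seq. split; lia.
    + exists (Z.to_nat y). rewrite in_seq. split; lia.
Qed.

Lemma NoDup_prod {A B} (l1 : list A) (l2 : list B) : NoDup l1 -> NoDup l2 -> NoDup (list_prod l1 l2).
Proof.
  induction 1 as [|a l1 Ha H1 IH]; intros H2; simpl; [constructor|].
  apply NoDup_app; auto.
  - apply FinFun.Injective_map_NoDup; auto. intros x y E; injection E; auto.
  - intros p Hp Hq. apply in_map_iff in Hp as (y&<-&_). apply in_prod_iff in Hq as [Hq _]. tauto.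
Qed.

Lemma NoDup_box B : NoDup (box B).
Proof.
  unfold box. apply NoDup_prod; apply FinFun.Injective_map_NoDup; try apply seq_NoDup;
  intros x y E; lia.
Qed.

Definition dpt (k i : nat) : Z * Z := (Z.of_nat i, Z.of_nat k - Z.of_nat i).
Definition tpt (k i : nat) : Z * Z := (Z.of_nat i, Z.of_nat k + 1 - Z.of_nat i).
Definition clp k i : Z * Z := (fst (dpt k i) - 1, snd (dpt k i)).
Definition crp k i : Z * Z := (fst (dpt k i), snd (dpt k i) - 1).

Fixpoint slist (k n : nat) : list (Z * Z) :=
  match n with
  | O => [tpt k O]
  | S m => slist k m ++ [tpt k (S m); dpt k m]
  end.

Lemma slist_char k n p : In p (slist k n) ->
  (exists i, (i <= n)%nat /\ p = tpt k i) \/ (exists i, (i < n)%nat /\ p = dpt k i).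
Proof.
  induction n as [|m IH]; simpl; intros H.
  - destruct H as [<-|[]]. left; exists O; auto.
  - apply in_app_or in H as [H|[H|[H|[]]]].
    + destruct (IH H) as [(i&?&?)|(i&?&?)]; [left|right]; exists i; split; auto; lia.
    + left; exists (S m); auto.
    + right; exists m; auto.
Qed.

Lemma slist_in_t k n i : (i <= n)%nat -> In (tpt k i) (slist k n).
Proof.
  induction n as [|m IH]; intros Hi; simpl.
  - left; f_equal; lia.
  - apply in_or_app. destruct (Nat.eq_dec i (S m)) as [->|ne].
    + right; left; auto.
    + left; apply IH; lia.
Qed.

Lemma slist_in_d k n i : (i < n)%nat -> In (dpt k i) (slist k n).
Proof.
  induction n as [|m IH]; intros Hi; simpl; [lia|].
  apply in_or_app. destruct (Nat.eq_dec i m) as [->|ne].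
  + right; right; left; auto.
  + left; apply IH; lia.
Qed.

Lemma slist_NoDup k n : NoDup (slist k n).
Proof.
  induction n as [|m IH]; simpl.
  - repeat constructor; auto.
  - apply NoDup_app; auto.
    + constructor; [|constructor; [intros []|constructor]].
      intros [E|[]]. unfold tpt, dpt in E. injection E; lia.
    + intros p Hp Hq. apply slist_char in Hp.
      destruct Hq as [<-|[<-|[]]]; destruct Hp as [(i&Hi&E)|(i&Hi&E)];
        unfold tpt, dpt in E; injection E; lia.
Qed.

Lemma sum_slist k (F : Z * Z -> val) (HF : F (-1, Z.of_nat k + 1) = Zero) n :
  sumZ (fun a => W2 (F a) (F (fst a - 1, snd a)) (F (fst a, snd a - 1))) (slist k n) =
  PS (fun i => F (tpt k i)) (fun i => F (clp k i)) (fun i => F (crp k i)) (fun i => F (dpt k i)) n.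
Proof.
  induction n as [|m IH].
  - cbn [slist sumZ fold_right PS]. rewrite Z.add_0_r. f_equal.
    + rewrite <- HF. f_equal. unfold tpt; cbn [fst snd]. f_equal; lia.
    + f_equal. unfold tpt, dpt; cbn [fst snd]. f_equal; lia.
  - cbn [slist PS]. rewrite sumZ_app, IH. cbn [sumZ fold_right].
    assert (E1 : F (fst (tpt k (S m)) - 1, snd (tpt k (S m))) = F (dpt k m))
      by (f_equal; unfold tpt, dpt; cbn [fst snd]; f_equal; lia).
    assert (E2 : F (fst (tpt k (S m)), snd (tpt k (S m)) - 1) = F (dpt k (S m)))
      by (f_equal; unfold tpt, dpt; cbn [fst snd]; f_equal; lia).
    rewrite E1, E2. unfold clp, crp. lia.
Qed.

Definition ondiag (k : nat) (p : Z * Z) : bool :=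
  (fst p + snd p =? Z.of_nat k) && (0 <=? fst p) && (fst p <=? Z.of_nat k).

Lemma ondiag_spec k p : ondiag k p = true <->
  fst p + snd p = Z.of_nat k /\ 0 <= fst p /\ fst p <= Z.of_nat k.
Proof. unfold ondiag. rewrite !andb_true_iff, Z.eqb_eq, !Z.leb_le. tauto. Qed.

Lemma sumZ_ext {A} (f g : A -> Z) l : (forall a, f a = g a) -> sumZ f l = sumZ g l.
Proof. intros H; induction l; simpl; auto. rewrite H, IHl; auto. Qed.

Theorem mainTheorem10 (k : nat) (D : NewtonDiagram2)
  (hlow : forall a b : nat, (a + b < k)%nat ->
            D (Z.of_nat a, Z.of_nat b) <> Zero)
  (hk : exists a b : nat, (a + b = k)%nat /\
            D (Z.of_nat a, Z.of_nat b) <> Zero) :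
  exists Dt : NewtonDiagram2,
    (forall p, D p <> Zero -> Dt p = D p) /\
    (forall a b : nat, (a + b = k)%nat -> Dt (Z.of_nat a, Z.of_nat b) <> Zero) /\
    (forall p, Dt p <> Zero -> D p = Zero -> (fst p + snd p = Z.of_nat k)%Z) /\
    Qle (SC Dt) (SC D).
Proof.
  destruct (Nat.eq_dec k 0) as [k0|kpos].
  { subst k. exists D. split; [auto|]. split; [|split; [intros p H1 H2; congruence|apply Qle_refl]].
    intros a b Hab. assert (a = O) by lia. assert (b = O) by lia. subst.
    destruct hk as (a&b&Hab'&H). assert (a = O) by lia. assert (b = O) by lia. subst; auto. }
  assert (Dz : forall p, fst p < 0 \/ snd p < 0 \/ fst p >= Z.of_nat (nd_bnd D)
                \/ snd p >= Z.of_nat (nd_bnd D) -> D p = Zero).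
  { intros p Hp. destruct (D p) eqn:E; auto; exfalso;
    pose proof (nd_supp_box D p ltac:(congruence)); lia. }
  set (tt := fun i => D (tpt k i)). set (cl := fun i => D (clp k i)).
  set (cr := fun i => D (crp k i)). set (dd := fun i => D (dpt k i)).
  destruct (dp k dd tt cl cr) as (y & Hy & Hy1 & HPS).
  - unfold cl. apply Dz. unfold clp, dpt; cbn [fst snd]. lia.
  - unfold cr. replace (crp k 0) with (Z.of_nat 0, Z.of_nat (k - 1))
      by (unfold crp, dpt; cbn [fst snd]; f_equal; lia). apply hlow; lia.
  - unfold cr. apply Dz. unfold crp, dpt; cbn [fst snd]. lia.
  - unfold cl. replace (clp k k) with (Z.of_nat (k - 1), Z.of_nat 0)
      by (unfold clp, dpt; cbn [fst snd]; f_equal; lia). apply hlow; lia.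
  - unfold dd. apply Dz. unfold dpt; cbn [fst snd]. lia.
  - destruct hk as (a&b&Hab&H). exists a. split; [lia|]. unfold dd.
    replace (dpt k a) with (Z.of_nat a, Z.of_nat b) by (unfold dpt; f_equal; lia). auto.
  - cbv beta in Hy.
    set (Dtf := fun p => if ondiag k p then y (Z.to_nat (fst p)) else D p).
    assert (Loff : forall p, ~ (fst p + snd p = Z.of_nat k /\ 0 <= fst p /\ fst p <= Z.of_nat k) ->
                   Dtf p = D p).
    { intros p Hp. unfold Dtf. destruct (ondiag k p) eqn:E; auto.
      apply ondiag_spec in E; tauto. }
    assert (Ld : forall i, (i <= k)%nat -> Dtf (dpt k i) = y i).
    { intros i Hi. unfold Dtf. replace (ondiag k (dpt k i)) with true.
      - unfold dpt; cbn [fst]. rewrite Nat2Z.id. auto.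
      - symmetry; apply ondiag_spec. unfold dpt; cbn [fst snd]. lia. }
    assert (Dtbox : forall p, Dtf p <> Zero ->
        0 <= fst p < Z.of_nat (nd_bnd D + k + 1) /\ 0 <= snd p < Z.of_nat (nd_bnd D + k + 1)).
    { intros p Hp. unfold Dtf in Hp. destruct (ondiag k p) eqn:E.
      - apply ondiag_spec in E. lia.
      - pose proof (nd_supp_box D p Hp). lia. }
    assert (Dtne : exists p, Dtf p <> Zero).
    { exists (dpt k 0). rewrite Ld by lia. apply Hy; lia. }
    exists (Build_NewtonDiagram2 Dtf (nd_bnd D + k + 1) Dtbox Dtne). cbn [nd_fun nd_bnd].
    split; [|split; [|split]].
    + intros [x z] H. destruct (ondiag k (x, z)) eqn:E.
      * apply ondiag_spec in E; cbn [fst snd] in E.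
        assert (Ep : (x, z) = dpt k (Z.to_nat x)) by (unfold dpt; f_equal; lia).
        rewrite Ep in *. rewrite Ld by lia. apply Hy; [lia|auto].
      * unfold Dtf. rewrite E. auto.
    + intros a b Hab. replace (Z.of_nat a, Z.of_nat b) with (dpt k a)
        by (unfold dpt; f_equal; lia). rewrite Ld by lia. apply Hy; lia.
    + intros p H1 H2. destruct (ondiag k p) eqn:E.
      * apply ondiag_spec in E; tauto.
      * unfold Dtf in H1. rewrite E in H1. congruence.
    + rewrite (SC_eq (Build_NewtonDiagram2 Dtf (nd_bnd D + k + 1) Dtbox Dtne)), (SC_eq D).
      cbn [nd_fun nd_bnd]. apply Qmult_le_l; [reflexivity|]. rewrite <- Zle_Qle.
      set (B' := (nd_bnd D + k + 1)%nat).
      assert (SA : sumZ (ww D) (box (nd_bnd D)) = sumZ (ww D) (box B')).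
      { symmetry. apply sumZ_sub; try apply NoDup_box.
        - intros p Hp. rewrite in_box in *. unfold B'. lia.
        - intros [x z] _ Hn. rewrite in_box in Hn. cbn [fst snd] in Hn. rewrite ww_W2.
          cbn [fst snd].
          rewrite (Dz (x, z)), (Dz (x - 1, z)), (Dz (x, z - 1)); [reflexivity| cbn [fst snd]; lia ..]. }
      assert (SB : sumZ (ww Dtf) (box B') - sumZ (ww D) (box B') =
                   sumZ (ww Dtf) (slist k (S k)) - sumZ (ww D) (slist k (S k))).
      { rewrite <- !sumZ_minus. apply sumZ_sub.
        - apply NoDup_box.
        - apply slist_NoDup.
        - intros p Hp. apply slist_char in Hp. rewrite in_box. unfold B'.
          destruct Hp as [(i&Hi&->)|(i&Hi&->)]; unfold tpt, dpt; cbn [fst snd]; lia.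
        - intros [x z] _ Hn. rewrite !ww_W2. cbn [fst snd].
          rewrite (Loff (x, z)), (Loff (x - 1, z)), (Loff (x, z - 1)); [lia| ..];
          cbn [fst snd]; intros (E1&E2&E3); apply Hn.
          + replace (x, z) with (tpt k (Z.to_nat x)) by (unfold tpt; f_equal; lia).
            apply slist_in_t; lia.
          + replace (x, z) with (tpt k (Z.to_nat x)) by (unfold tpt; f_equal; lia).
            apply slist_in_t; lia.
          + replace (x, z) with (dpt k (Z.to_nat x)) by (unfold dpt; f_equal; lia).
            apply slist_in_d; lia. }
      assert (SC1 : sumZ (ww Dtf) (slist k (S k)) = PS tt cl cr y (S k)).
      { rewrite (sumZ_ext _ _ _ (ww_W2 Dtf)), sum_slist.
        - apply PS_ext. intros i Hi. unfold tt, cl, cr.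
          split; [|split; [|split]].
          + apply Loff. unfold tpt; cbn [fst snd]. lia.
          + apply Loff. unfold clp, dpt; cbn [fst snd]. lia.
          + apply Loff. unfold crp, dpt; cbn [fst snd]. lia.
          + destruct (Nat.eq_dec i (S k)) as [->|ne].
            * rewrite Hy1, Loff; [apply Dz|]; unfold dpt; cbn [fst snd]; lia.
            * apply Ld; lia.
        - rewrite Loff; [apply Dz|]; cbn [fst snd]; lia. }
      assert (SC2 : sumZ (ww D) (slist k (S k)) = PS tt cl cr dd (S k)).
      { rewrite (sumZ_ext _ _ _ (ww_W2 D)), sum_slist; [reflexivity|].
        apply Dz; cbn [fst snd]; lia. }
      lia.
Qed.
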